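(* Let $A:\mathbb{R}^d\rightrightarrows\mathbb{R}^d$ be maximal monotone with $A^{-1}(0)\neq\emptyset$, let $p\geq1$ be an integer, $\sigma\in(0,1)$, $\theta>0$, $x_0\in\mathbb{R}^d$, and suppose $\lambda_k>0$, $y_k,v_k,x_k\in\mathbb{R}^d$, $\epsilon_k\geq0$ satisfy for every $k\geq0$: $v_{k+1}\in A^{\epsilon_{k+1}}(y_{k+1})$, $\|\lambda_{k+1}v_{k+1}+y_{k+1}-x_k\|^2+2\lambda_{k+1}\epsilon_{k+1}\leq\sigma^2\|y_{k+1}-x_k\|^2$, $\lambda_{k+1}\|y_{k+1}-x_k\|^{p-1}\geq\theta$, and $x_{k+1}=x_k-\lambda_{k+1}v_{k+1}$. Then for every integer $k\geq1$, \[ \inf_{1\leq i\leq k}\sqrt{\lambda_i}\|v_i\|\leq\sqrt{\tfrac{1+\sigma}{1-\sigma}}\Big(\sum_{i=1}^k\lambda_i\Big)^{-\frac12}\inf_{z^\star\in A^{-1}(0)}\|x_0-z^\star\|, \] \[ \inf_{1\leq i\leq k}\epsilon_i\leq\frac{\sigma^2}{2(1-\sigma^2)}\Big(\sum_{i=1}^k\lambda_i\Big)^{-1}\inf_{z^\star\in A^{-1}(0)}\|x_0-z^\star\|^2. \]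
   Context: The $\epsilon$-enlargement is $A^{\epsilon}(x)=\{v\in\mathbb{R}^d:\langle x-\tilde x,v-\tilde v\rangle\geq-\epsilon\ \forall\tilde x\in\mathbb{R}^d,\ \forall\tilde v\in A\tilde x\}$. *)

(* Defs.v *)
From HB Require Import structures.
From mathcomp Require Import all_boot all_order all_algebra.
From mathcomp Require Import boolp classical_sets reals.
Set Implicit Arguments. Unset Strict Implicit. Unset Printing Implicit Defensive.
Import Order.TTheory GRing.Theory Num.Theory.
Local Open Scope ring_scope.

Definition dotv (R : realType) (d : nat) (u w : 'rV[R]_d) : R :=
  \sum_(i < d) u 0 i * w 0 i.
Definition enorm (R : realType) (d : nat) (u : 'rV[R]_d) : R :=
  Num.sqrt (dotv u u).

(* A set-valued operator A : R^d ⇉ R^d, given by its graph: A x v <-> v ∈ A x *)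
Definition setop (R : realType) (d : nat) := 'rV[R]_d -> 'rV[R]_d -> Prop.

Definition monotone (R : realType) (d : nat) (A : setop R d) : Prop :=
  forall x y u w, A x u -> A y w -> 0 <= dotv (x - y) (u - w).

Definition maximal_monotone (R : realType) (d : nat) (A : setop R d) : Prop :=
  monotone A /\
  forall B : setop R d, monotone B -> (forall x v, A x v -> B x v) ->
    forall x v, B x v -> A x v.

Definition enlargement (R : realType) (d : nat) (A : setop R d) (eps : R)
  (x v : 'rV[R]_d) : Prop :=
  forall xt vt, A xt vt -> dotv (x - xt) (v - vt) >= - eps.

(* Main.v *)
Require Import Defs.
From HB Require Import structures.
From mathcomp Require Import all_boot all_order all_algebra.
From mathcomp Require Import boolp classical_sets reals.
From mathcomp Require Import ring lra.
Import Order.TTheory GRing.Theory Num.Theory.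
Local Open Scope ring_scope.
Local Open Scope classical_set_scope.

Module Aux.
Set Implicit Arguments. Unset Strict Implicit.
Section D.
Variables (R : realType) (d : nat).
Implicit Types u w z : 'rV[R]_d.
Lemma dotvDl u w z : dotv (u + w) z = dotv u z + dotv w z.
Proof. by rewrite /dotv -big_split; apply: eq_bigr => i _; rewrite mxE mulrDl. Qed.
Lemma dotvC u w : dotv u w = dotv w u.
Proof. by apply: eq_bigr => i _; rewrite mulrC. Qed.
Lemma dotvDr u w z : dotv z (u + w) = dotv z u + dotv z w.
Proof. by rewrite dotvC dotvDl !(dotvC z). Qed.
Lemma dotvZl a u w : dotv (a *: u) w = a * dotv u w.
Proof. by rewrite /dotv mulr_sumr; apply: eq_bigr => i _; rewrite mxE mulrA. Qed.
Lemma dotvZr a u w : dotv w (a *: u) = a * dotv w u.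
Proof. by rewrite dotvC dotvZl dotvC. Qed.
Lemma dotvNl u w : dotv (- u) w = - dotv u w.
Proof. by rewrite -scaleN1r dotvZl mulN1r. Qed.
Lemma dotvNr u w : dotv w (- u) = - dotv w u.
Proof. by rewrite dotvC dotvNl dotvC. Qed.
Lemma dotv_ge0 u : 0 <= dotv u u.
Proof. by apply: sumr_ge0 => i _; rewrite -expr2 sqr_ge0. Qed.
Lemma enorm_sq u : enorm u ^+ 2 = dotv u u.
Proof. by rewrite /enorm sqr_sqrtr // dotv_ge0. Qed.
Lemma enorm_ge0 u : 0 <= enorm u.
Proof. exact: sqrtr_ge0. Qed.
End D.

Lemma argmin_ex (R : realType) (f : nat -> R) k : (1 <= k)%N ->
  exists i, [/\ (1 <= i <= k)%N & forall j, (1 <= j <= k)%N -> f i <= f j].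
Proof.
elim: k => // k IH _.
case: (posnP k) => [->|kp].
  exists 1%N; split => // j /andP[a b]. have -> : j = 1%N by apply/eqP; rewrite eqn_leq b a. done.
have [i [/andP[i1 ik] Hi]] := IH kp.
case: (leP (f i) (f k.+1)) => h.
  exists i; split; first by rewrite i1 /= ltnW // ltnS.
  move=> j /andP[j1]; rewrite leq_eqVlt => /orP[/eqP->//|]; rewrite ltnS => jk.
  by apply: Hi; rewrite j1.
exists k.+1; split; first by rewrite ltn0Sn leqnn.
move=> j /andP[j1]; rewrite leq_eqVlt => /orP[/eqP->//|]; rewrite ltnS => jk.
by apply: le_trans (ltW h) (Hi j _); rewrite j1.
Qed.

End Aux.
Import Aux.

Ltac expand := rewrite ?(dotvDl, dotvDr, dotvNl, dotvNr, dotvZl, dotvZr).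

Lemma step (R : realType) d (lam eps sig : R) (a b v : 'rV[R]_d) : 0 < lam ->
  - eps <= dotv (a + b) v ->
  dotv (lam *: v + b) (lam *: v + b) + 2 * lam * eps <= sig ^+ 2 * dotv b b ->
  (1 - sig ^+ 2) * dotv b b <= dotv a a - dotv (a - lam *: v) (a - lam *: v).
Proof.
move=> l0; expand; rewrite (dotvC b v) (dotvC v a) => h1 h2.
have h3 : 0 <= lam * (dotv a v + dotv v b + eps) by apply: mulr_ge0; lra.
nra.
Qed.

Lemma step2 (R : realType) d (lam eps sig : R) (b v : 'rV[R]_d) : 0 < lam -> 0 < sig ->
  dotv (lam *: v + b) (lam *: v + b) + 2 * lam * eps <= sig ^+ 2 * dotv b b ->
  0 <= eps ->
  lam ^+ 2 * dotv v v <= (1 + sig) ^+ 2 * dotv b b.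
Proof.
move=> l0 s0 h e0.
have h0 := dotv_ge0 (lam *: v + b + sig *: b).
have hb := dotv_ge0 b.
move: h h0; expand; rewrite (dotvC b v) => h h0.
have h4 : 0 <= lam * eps by apply: mulr_ge0; lra.
have h5 : 0 <= (1 + sig) * (sig ^+ 2 * dotv b b - (lam * (lam * dotv v v + dotv v b) +
    (lam * dotv v b + dotv b b))) by apply: mulr_ge0; lra.
suff : sig * (lam ^+ 2 * dotv v v) <= sig * ((1 + sig) ^+ 2 * dotv b b).
  by rewrite ler_pM2l.
nra.
Qed.

Lemma inf_bound (R : realType) (X : Type) (F : set X) (g : X -> R) (c t : R) :
  0 < c -> (exists z, F z) -> (forall z, F z -> t <= c * g z) ->
  t <= c * inf [set g z | z in F].
Proof.
move=> c0 [z0 Fz0] H.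
rewrite -ler_pdivrMl //.
apply: lb_le_inf; first by exists (g z0), z0.
move=> w [z Fz <-]; rewrite ler_pdivrMl //; exact: H.
Qed.

Lemma sqrt_step (R : realType) (f S C N : R) : 0 <= f -> 0 < S -> 0 <= C -> 0 <= N ->
  f * S <= C * N -> Num.sqrt f <= Num.sqrt C * (Num.sqrt S)^-1 * Num.sqrt N.
Proof.
move=> f0 S0 C0 N0 h.
rewrite mulrAC ler_pdivlMr ?sqrtr_gt0 // -!sqrtrM //.
by rewrite ler_sqrt // mulr_ge0 //.
Qed.

Lemma lin_step (R : realType) (f S C N : R) : 0 < S ->
  f * S <= C * N -> f <= C * S^-1 * N.
Proof.
move=> S0 h; rewrite mulrAC ler_pdivlMr //.
Qed.

Theorem lemma4p2 (R : realType) (d : nat) (A : setop R d)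
  (p : nat) (sigma theta : R)
  (lam eps : nat -> R) (x y v : nat -> 'rV[R]_d) :
  maximal_monotone A ->
  (exists z : 'rV[R]_d, A z 0) ->
  (1 <= p)%N ->
  0 < sigma -> sigma < 1 -> 0 < theta ->
  (forall k, 0 < lam k.+1) ->
  (forall k, 0 <= eps k.+1) ->
  (forall k, enlargement A (eps k.+1) (y k.+1) (v k.+1)) ->
  (forall k, enorm (lam k.+1 *: v k.+1 + y k.+1 - x k) ^+ 2
               + 2 * lam k.+1 * eps k.+1
             <= sigma ^+ 2 * enorm (y k.+1 - x k) ^+ 2) ->
  (forall k, lam k.+1 * enorm (y k.+1 - x k) ^+ (p - 1) >= theta) ->
  (forall k, x k.+1 = x k - lam k.+1 *: v k.+1) ->
  forall k : nat, (1 <= k)%N ->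
    (exists2 i : nat, (1 <= i <= k)%N &
       Num.sqrt (lam i) * enorm (v i)
       <= Num.sqrt ((1 + sigma) / (1 - sigma))
          * (Num.sqrt (\sum_(1 <= i < k.+1) lam i))^-1
          * inf [set enorm (x 0%N - z) | z in [set z | A z 0]])
    /\
    (exists2 i : nat, (1 <= i <= k)%N &
       eps i
       <= sigma ^+ 2 / (2 * (1 - sigma ^+ 2))
          * (\sum_(1 <= i < k.+1) lam i)^-1
          * inf [set enorm (x 0%N - z) ^+ 2 | z in [set z | A z 0]]).
Proof.
move=> _ Hne _ s0 s1 _ Hl He Henl Hs _ Hx k k1.
pose B i := dotv (y i.+1 - x i) (y i.+1 - x i).
have Bge0 i : 0 <= B i by apply: dotv_ge0.
have tele z : A z 0 -> forall n,
   (1 - sigma ^+ 2) * \sum_(0 <= i < n) B i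
     <= dotv (x 0%N - z) (x 0%N - z) - dotv (x n - z) (x n - z).
  move=> Az; elim=> [|n IH]; first by rewrite big_geq // mulr0 subrr.
  rewrite big_nat_recr //= mulrDr.
  have st := @step R d (lam n.+1) (eps n.+1) sigma (x n - z) (y n.+1 - x n) (v n.+1) (Hl n).
  have e1 : x n - z + (y n.+1 - x n) = y n.+1 - z by rewrite addrC addrA subrK.
  have e2 : x n.+1 - z = x n - z - lam n.+1 *: v n.+1 by rewrite Hx addrAC.
  have h1 : - eps n.+1 <= dotv (x n - z + (y n.+1 - x n)) (v n.+1).
    by rewrite e1; move: (Henl n z 0 Az); rewrite subr0.
  have h2 := Hs n; rewrite !enorm_sq -addrA in h2.
  have := st h1 h2; rewrite -e2 /B; lra.
have S0 : 0 < \sum_(1 <= i < k.+1) lam i.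
  rewrite big_nat_recl // big_nat_cond; apply: (@lt_le_trans _ _ (lam 1%N)); first exact: (Hl 0%N).
  by rewrite lerDl; apply: sumr_ge0 => i _; apply: ltW.
have shift (f : nat -> R) : \sum_(1 <= i < k.+1) f i = \sum_(0 <= i < k) f i.+1.
  by rewrite big_add1.
split.
- have [m [m1 Hm]] := argmin_ex (fun i => lam i * dotv (v i) (v i)) k1.
  exists m => //.
  have lm0 : 0 < lam m by case: m m1 {Hm} => // m _; exact: Hl.
  apply: inf_bound.
    by apply: mulr_gt0; rewrite ?invr_gt0 sqrtr_gt0 // divr_gt0 //; lra.
    by case: Hne => z Hz; exists z.
  move=> z Az.
  rewrite /enorm -sqrtrM; last exact: ltW.
  apply: sqrt_step => //; first by rewrite mulr_ge0 ?dotv_ge0 // ltW.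
    by rewrite divr_ge0 //; lra.
    by apply: dotv_ge0.
  have t := tele z Az k.
  have hx := dotv_ge0 (x k - z).
  have hsum : \sum_(0 <= i < k) B i <= dotv (x 0%N - z) (x 0%N - z) / (1 - sigma ^+ 2).
    rewrite ler_pdivlMr; last by nra. lra.
  rewrite mulrC shift mulr_suml.
  apply: (@le_trans _ _ (\sum_(0 <= i < k) (1 + sigma) ^+ 2 * B i)).
    apply: ler_sum_nat => i /andP[_ ik].
    apply: (@le_trans _ _ (lam i.+1 * (lam i.+1 * dotv (v i.+1) (v i.+1)))).
      by rewrite ler_pM2l //; apply: Hm.
    rewrite mulrA -expr2 /B; apply: (@step2 R d _ _ _ _ _ (Hl i) s0 _ (He i)).
    by have := Hs i; rewrite !enorm_sq -addrA.
  rewrite -mulr_sumr.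
  have -> : (1 + sigma) / (1 - sigma) = (1 + sigma) ^+ 2 / (1 - sigma ^+ 2).
    by field; apply/andP; split; apply/eqP; nra.
  rewrite -mulrA ler_pM2l; last by nra.
  by rewrite mulrC.
- have [m [m1 Hm]] := argmin_ex eps k1.
  exists m => //.
  apply: inf_bound.
    by apply: mulr_gt0; rewrite ?invr_gt0 // divr_gt0 //; nra.
    by case: Hne => z Hz; exists z.
  move=> z Az.
  rewrite enorm_sq; apply: lin_step => //.
  have t := tele z Az k.
  have hx := dotv_ge0 (x k - z).
  have hsum : \sum_(0 <= i < k) B i <= dotv (x 0%N - z) (x 0%N - z) / (1 - sigma ^+ 2).
    rewrite ler_pdivlMr; last by nra. lra.
  rewrite mulrC shift mulr_suml.
  apply: (@le_trans _ _ (\sum_(0 <= i < k) sigma ^+ 2 / 2 * B i)).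
    apply: ler_sum_nat => i /andP[_ ik].
    apply: (@le_trans _ _ (lam i.+1 * eps i.+1)).
      by rewrite ler_pM2l //; apply: Hm.
    have := Hs i; rewrite !enorm_sq => h.
    have := dotv_ge0 (lam i.+1 *: v i.+1 + y i.+1 - x i); rewrite /B; lra.
  rewrite -mulr_sumr.
  have -> : sigma ^+ 2 / (2 * (1 - sigma ^+ 2)) = sigma ^+ 2 / 2 / (1 - sigma ^+ 2).
    by rewrite invfM mulrA.
  rewrite -(mulrA (sigma ^+ 2 / 2)) ler_pM2l; last by nra.
  by rewrite mulrC.
Qed.
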